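(* A metric space $(X,d_X)$ is coarse Lipschitz embeddable into $c_0(\kappa)$ for some cardinality $\kappa$ if and only if there are $C,D\in[0,\infty)$ such that $\Delta_X^{(c)}(R)\leq CR+D$ for all $R\in[0,\infty)$. A metric space $(X,d_X)$ is bi-Lipschitz embeddable into $c_0(\kappa)$ for some cardinality $\kappa$ if and only if there is $C\in[0,\infty)$ such that $\Delta_X^{(c)}(R)\leq CR$ for all $R\in[0,\infty)$.
   Context: For a cardinal $\kappa$, $c_0(\kappa)$ is the space of real families $(x_\xi)_{\xi<\kappa}$ such that $\{\xi: |x_\xi|>\eta\}$ is finite for every $\eta>0$, with the sup norm. For a cover $\mathcal{U}$ of $X$: $\mathrm{diam}(\mathcal{U})=\sup_{U\in\mathcal{U}}\mathrm{diam}(U)$; $\mathcal{L}(\mathcal{U})=\sup\{d\in[0,\infty): \text{every } E\subseteq X \text{ with } \mathrm{diam}(E)<d \text{ is contained in some } U\in\mathcal{U}\}$; $\mathcal{U}$ is point-finite if each point lies in only finitely many members. $\Delta_X^{(c)}(R)=\inf\{\mathrm{diam}(\mathcal{U}): \mathcal{U} \text{ a point-finite cover of } X,\ \mathcal{L}(\mathcal{U})\geq R\}$ (infimum of the empty set is $\infty$). For $f\colon X\to Y$, $\omega_f(t)=\sup\{d_Y(f(x_1),f(x_2)): d_X(x_1,x_2)\leq t\}$, $\rho_f(t)=\inf\{d_Y(f(x_1),f(x_2)): d_X(x_1,x_2)\geq t\}$. $f$ is a coarse Lipschitz embedding if there exist $A\geq1$, $B\geq0$ with $\omega_f(t)\leq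 At+B$ and $\rho_f(t)\geq t/A-B$ for all $t$; it is a bi-Lipschitz embedding if moreover one can take $B=0$. *)

(* Defs.v *)
From Stdlib Require Import Reals List.
From Coquelicot Require Import Coquelicot.
Open Scope R_scope.

Definition is_metric {X : Type} (d : X -> X -> R) : Prop :=
  (forall x y, 0 <= d x y) /\
  (forall x y, d x y = 0 <-> x = y) /\
  (forall x y, d x y = d y x) /\
  (forall x y z, d x z <= d x y + d y z).

(* diam(E) = sup { d(x,y) : x,y in E }  (in [-oo, +oo]; -oo for E empty) *)
Definition diam {X : Type} (d : X -> X -> R) (E : X -> Prop) : Rbar :=
  Rbar_lub (fun s => exists x y, E x /\ E y /\ s = Finite (d x y)).

Definition is_cover {X : Type} (U : (X -> Prop) -> Prop) : Prop :=
  forall x, exists V, U V /\ V x.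

Definition point_finite {X : Type} (U : (X -> Prop) -> Prop) : Prop :=
  forall x, exists l : list (X -> Prop), forall V, U V -> V x -> In V l.

Definition cover_diam {X : Type} (d : X -> X -> R) (U : (X -> Prop) -> Prop) : Rbar :=
  Rbar_lub (fun s => exists V, U V /\ s = diam d V).

Definition lebesgue {X : Type} (d : X -> X -> R) (U : (X -> Prop) -> Prop) : Rbar :=
  Rbar_lub (fun s => exists r : R, s = Finite r /\ 0 <= r /\
    forall E : X -> Prop, Rbar_lt (diam d E) (Finite r) ->
      exists V, U V /\ forall x, E x -> V x).

(* Delta_X^{(c)}(R) = inf { diam U : U point-finite cover, L(U) >= R } (inf of empty = +oo) *)
Definition Delta_c {X : Type} (d : X -> X -> R) (R0 : R) : Rbar :=
  Rbar_glb (fun s => exists U : (X -> Prop) -> Prop,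
    is_cover U /\ point_finite U /\ Rbar_le (Finite R0) (lebesgue d U) /\
    s = cover_diam d U).

Definition in_c0 {I : Type} (x : I -> R) : Prop :=
  forall eta : R, 0 < eta ->
    exists l : list I, forall i, Rabs (x i) > eta -> In i l.

(* sup-norm distance on c_0(I) (the 0 accounts for I empty; all terms are >= 0) *)
Definition c0_dist {I : Type} (u v : I -> R) : Rbar :=
  Rbar_lub (fun s => s = Finite 0 \/ exists i, s = Finite (Rabs (u i - v i))).

Definition omega_f {X I : Type} (d : X -> X -> R) (f : X -> I -> R) (t : R) : Rbar :=
  Rbar_lub (fun s => exists x1 x2, d x1 x2 <= t /\ s = c0_dist (f x1) (f x2)).

Definition rho_f {X I : Type} (d : X -> X -> R) (f : X -> I -> R) (t : R) : Rbar :=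
  Rbar_glb (fun s => exists x1 x2, d x1 x2 >= t /\ s = c0_dist (f x1) (f x2)).

Definition coarse_lipschitz_embedding {X I : Type} (d : X -> X -> R) (f : X -> I -> R) : Prop :=
  (forall x, in_c0 (f x)) /\
  exists A B : R, 1 <= A /\ 0 <= B /\
    forall t : R, Rbar_le (omega_f d f t) (Finite (A * t + B)) /\
                  Rbar_le (Finite (t / A - B)) (rho_f d f t).

Definition bilipschitz_embedding {X I : Type} (d : X -> X -> R) (f : X -> I -> R) : Prop :=
  (forall x, in_c0 (f x)) /\
  exists A : R, 1 <= A /\
    forall t : R, Rbar_le (omega_f d f t) (Finite (A * t)) /\
                  Rbar_le (Finite (t / A)) (rho_f d f t).

(* Main.v *)
Require Import Defs.
From Stdlib Require Import Reals List Lra Lia Classical ClassicalEpsilon FunctionalExtensionality.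
From Coquelicot Require Import Coquelicot.
Open Scope R_scope.

Lemma lub_ub (E : Rbar -> Prop) x : E x -> Rbar_le x (Rbar_lub E).
Proof. intros H. unfold Rbar_lub. destruct (Rbar_ex_lub E) as [l Hl]. simpl. exact (proj1 Hl x H). Qed.
Lemma lub_least (E : Rbar -> Prop) b : (forall x, E x -> Rbar_le x b) -> Rbar_le (Rbar_lub E) b.
Proof. intros H. unfold Rbar_lub. destruct (Rbar_ex_lub E) as [l Hl]. simpl. exact (proj2 Hl b H). Qed.
Lemma glb_lb (E : Rbar -> Prop) x : E x -> Rbar_le (Rbar_glb E) x.
Proof. intros H. unfold Rbar_glb. destruct (Rbar_ex_glb E) as [l Hl]. simpl. exact (proj1 Hl x H). Qed.
Lemma glb_greatest (E : Rbar -> Prop) b : (forall x, E x -> Rbar_le b x) -> Rbar_le b (Rbar_glb E).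
Proof. intros H. unfold Rbar_glb. destruct (Rbar_ex_glb E) as [l Hl]. simpl. exact (proj2 Hl b H). Qed.

Lemma c0_dist_ge {I} (u v : I -> R) i : Rbar_le (Finite (Rabs (u i - v i))) (c0_dist u v).
Proof. apply lub_ub. right. eauto. Qed.
Lemma c0_dist_ge0 {I} (u v : I -> R) : Rbar_le (Finite 0) (c0_dist u v).
Proof. apply lub_ub. left. reflexivity. Qed.
Lemma c0_dist_le {I} (u v : I -> R) b : 0 <= b -> (forall i, Rabs (u i - v i) <= b) ->
  Rbar_le (c0_dist u v) (Finite b).
Proof. intros H0 H. apply lub_least. intros x [->|[i ->]]; simpl; auto. Qed.

Lemma diam_ge {X} (d : X -> X -> R) (E : X -> Prop) x y : E x -> E y ->
  Rbar_le (Finite (d x y)) (diam d E).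
Proof. intros. apply lub_ub. exists x, y. auto. Qed.
Lemma diam_le {X} (d : X -> X -> R) (E : X -> Prop) b : (forall x y, E x -> E y -> d x y <= b) ->
  Rbar_le (diam d E) (Finite b).
Proof. intros H. apply lub_least. intros s (x & y & Hx & Hy & ->). simpl. auto. Qed.

Definition zrange (N : Z) : list Z :=
  map (fun j => (Z.of_nat j - N)%Z) (seq 0 (Z.to_nat (2*N+1))).
Lemma zrange_in v N : (Z.abs v <= N)%Z -> In v (zrange N).
Proof.
  intros H. unfold zrange. apply in_map_iff. exists (Z.to_nat (v + N)).
  split. lia. apply in_seq. lia.
Qed.

Definition upd {I} (k : I -> Z) (a : I) (v : Z) : I -> Z :=
  fun i => if excluded_middle_informative (i = a) then v else k i.

Lemma fin_funs (I : Type) (l : list I) (N : I -> Z) : exists L : list (I -> Z),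
  forall k, (forall i, ~ In i l -> k i = 0%Z) -> (forall i, In i l -> (Z.abs (k i) <= N i)%Z) -> In k L.
Proof.
  induction l as [|a l IH].
  - exists ((fun _ => 0%Z) :: nil). intros k H0 _. left. apply functional_extensionality.
    intros i. symmetry. apply H0. simpl. tauto.
  - destruct IH as [L' HL'].
    exists (flat_map (fun k' => map (fun v => upd k' a v) (zrange (N a))) L').
    intros k H0 HN. apply in_flat_map.
    set (k' := fun i => if excluded_middle_informative (i = a) then 0%Z else k i).
    exists k'. split.
    + apply HL'.
      * intros i Hi. unfold k'. destruct (excluded_middle_informative (i = a)); auto.
        apply H0. simpl. intros [->|Hi']; tauto.
      * intros i Hi. unfold k'. destruct (excluded_middle_informative (i = a)).
        -- subst. specialize (HN a (or_introl eq_refl)). lia.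
        -- apply HN. simpl. auto.
    + apply in_map_iff. exists (k a). split.
      * apply functional_extensionality. intros i. unfold upd, k'.
        destruct (excluded_middle_informative (i = a)); subst; auto.
      * apply zrange_in. apply HN. simpl. auto.
Qed.

Lemma le_div a b h : 0 < h -> a * h <= b -> a <= b / h.
Proof. intros Hh H. unfold Rdiv. apply Rmult_le_reg_r with h; auto.
  rewrite Rmult_assoc, Rinv_l, Rmult_1_r; lra. Qed.

Lemma round_h t h : 0 < h -> Rabs (t - h * IZR (Int_part (t/h + /2))) <= h/2.
Proof.
  intros Hh. destruct (base_Int_part (t/h + /2)) as [H1 H2].
  set (n := IZR (Int_part (t/h + /2))) in *. assert (Ht : t = (t/h)*h) by (field; intro; lra). set (q := t/h) in *.
  assert (0 <= h*(q - n + /2)) by (apply Rmult_le_pos; lra).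
  assert (0 <= h*(/2 - (q - n))) by (apply Rmult_le_pos; lra).
  apply Rabs_le. rewrite Ht.
  replace (q * h - h * n) with (h*(q - n + /2) - h/2) by field.
  assert (h*(q - n + /2) + h*(/2 - (q - n)) = h) by field. lra.
Qed.

Lemma abs_sub_le a b c e1 e2 : Rabs (a - c) <= e1 -> Rabs (b - c) <= e2 -> Rabs (a - b) <= e1 + e2.
Proof. intros H1 H2. replace (a - b) with ((a - c) + - (b - c)) by ring.
  eapply Rle_trans. apply Rabs_triang. rewrite Rabs_Ropp. lra. Qed.

Lemma emb_to_cover {X I} (d : X -> X -> R) (Hd : is_metric d) (f : X -> I -> R)
  (Hc0 : forall x, in_c0 (f x)) (R0 L M : R) (HR0 : 0 <= R0) (HL : 0 < L)
  (Hlip : forall x y, d x y < R0 -> forall i, Rabs (f x i - f y i) < L)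
  (Hco : forall x y, (forall i, Rabs (f x i - f y i) <= 8*L) -> d x y <= M) :
  Rbar_le (Delta_c d R0) (Finite M).
Proof.
  set (h := 6*L). assert (Hh : 0 < h) by (unfold h; lra).
  set (P := fun (k : I -> Z) x => forall i, Rabs (f x i - h * IZR (k i)) <= 4*L).
  set (U := fun V : X -> Prop => exists k, V = P k).
  apply Rbar_le_trans with (cover_diam d U).
  { apply glb_lb. exists U. split; [|split; [|split]]; auto.
    - intros x. exists (P (fun i => Int_part (f x i / h + /2))). split. eexists; reflexivity.
      intros i. pose proof (round_h (f x i) h Hh). unfold h in *. lra.
    - intros x. destruct (Hc0 x L HL) as [l Hl].
      destruct (fin_funs I l (fun i => up (Rabs (f x i) / h + 1))) as [LL HLL].
      exists (map P LL). intros V [k ->] Hk. apply in_map. apply HLL.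
      + intros i Hi.
        assert (Hfx : Rabs (f x i) <= L).
        { destruct (Rle_dec (Rabs (f x i)) L) as [?|Hn]; auto. exfalso. apply Hi, Hl. lra. }
        specialize (Hk i).
        assert (Hkh : Rabs (IZR (k i)) * h < h).
        { rewrite Rabs_minus_sym in Hk.
          pose proof (Rabs_triang_inv (h*IZR (k i)) (f x i)) as H0.
          rewrite Rabs_mult in H0. rewrite (Rabs_right h) in H0 by lra. unfold h in *. lra. }
        assert (H1 : Rabs (IZR (k i)) < 1).
        { apply Rmult_lt_reg_r with h. lra. lra. }
        rewrite <- abs_IZR in H1. apply lt_IZR in H1. lia.
      + intros i _. specialize (Hk i).
        assert (Hkh : Rabs (IZR (k i)) * h <= Rabs (f x i) + h).
        { rewrite Rabs_minus_sym in Hk.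
          pose proof (Rabs_triang_inv (h*IZR (k i)) (f x i)) as H0.
          rewrite Rabs_mult in H0. rewrite (Rabs_right h) in H0 by lra. unfold h in *. lra. }
        pose proof (archimed (Rabs (f x i) / h + 1)) as [Ha _].
        assert (Hk2 : Rabs (IZR (k i)) <= Rabs (f x i)/h + 1).
        { replace (Rabs (f x i)/h + 1) with ((Rabs (f x i) + h)/h) by (field; intro; lra).
          apply le_div; auto. }
        rewrite <- abs_IZR in Hk2.
        assert (Hlt : IZR (Z.abs (k i)) < IZR (up (Rabs (f x i) / h + 1))) by lra.
        apply lt_IZR in Hlt. lia.
    - apply lub_ub.
      exists R0. split; [reflexivity|split; auto]. intros E HE.
      destruct (classic (exists e, E e)) as [[e He]|Hne].
      + exists (P (fun i => Int_part (f e i / h + /2))). split. eexists; reflexivity.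
        intros u Hu i. pose proof (round_h (f e i) h Hh) as Hr.
        assert (Hue : d u e < R0).
        { pose proof (diam_ge d E u e Hu He) as H0. pose proof (Rbar_le_lt_trans _ _ _ H0 HE) as H1.
          exact H1. }
        specialize (Hlip u e Hue i).
        replace (f u i - _) with ((f u i - f e i) + (f e i - h * IZR (Int_part (f e i / h + /2)))) by ring.
        eapply Rle_trans. apply Rabs_triang. unfold h in *; lra.
      + exists (P (fun _ => 0%Z)). split. eexists; reflexivity. intros u Hu. exfalso. eauto. }
  apply lub_least. intros s [V [[k ->] ->]]. apply diam_le. intros x y Hx Hy. apply Hco. intros i.
  specialize (Hx i); specialize (Hy i).
  pose proof (abs_sub_le _ _ _ _ _ Hx Hy). lra.
Qed.

Definition dcS {X} (d : X -> X -> R) (c : R) (V : X -> Prop) (x : X) : Rbar -> Prop :=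
  fun s => s = Finite c \/ exists y, ~ V y /\ s = Finite (d x y).
Definition dc {X} (d : X -> X -> R) (c : R) (V : X -> Prop) (x : X) : R :=
  real (Rbar_glb (dcS d c V x)).

Lemma dc_props {X} (d : X -> X -> R) (Hd : is_metric d) c (Hc : 0 <= c) V x :
  0 <= dc d c V x /\ dc d c V x <= c /\ (forall y, ~ V y -> dc d c V x <= d x y) /\
  (forall b, b <= c -> (forall y, ~ V y -> b <= d x y) -> b <= dc d c V x).
Proof.
  destruct Hd as [Hd0 _].
  unfold dc.
  pose proof (glb_lb (dcS d c V x) (Finite c) (or_introl eq_refl)) as H1.
  assert (H2 : Rbar_le (Finite 0) (Rbar_glb (dcS d c V x))).
  { apply glb_greatest. intros s [->|[y [_ ->]]]; simpl; auto. }
  pose proof (fun y (Hy : ~ V y) => glb_lb (dcS d c V x) _ (or_intror (ex_intro _ y (conj Hy eq_refl)))) as H3.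
  assert (H4 : forall b, b <= c -> (forall y, ~ V y -> b <= d x y) -> Rbar_le (Finite b) (Rbar_glb (dcS d c V x))).
  { intros b Hb Hy. apply glb_greatest. intros s [->|[y [Hy' ->]]]; simpl; auto. }
  destruct (Rbar_glb (dcS d c V x)) as [g| |]; simpl in *; try contradiction.
  split; [auto|split; [auto|split]].
  - intros y Hy. exact (H3 y Hy).
  - intros b Hb Hy. exact (H4 b Hb Hy).
Qed.

Lemma dc_lip {X} (d : X -> X -> R) (Hd : is_metric d) c (Hc : 0 <= c) V x y :
  dc d c V y <= dc d c V x + d x y.
Proof.
  pose proof Hd as [Hd0 [Hdeq [Hsym Htri]]].
  destruct (dc_props d Hd c Hc V x) as (_ & _ & _ & Hx).
  destruct (dc_props d Hd c Hc V y) as (Hy0 & Hyc & Hy & _).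
  assert (dc d c V y - d x y <= dc d c V x); [|lra].
  apply Hx. pose proof (Hd0 x y); lra.
  intros z Hz. specialize (Hy z Hz). pose proof (Htri y x z). rewrite (Hsym y x) in *. lra.
Qed.

Definition sc (n : Z) : R := exp (IZR n * ln 2).
Lemma sc_pos n : 0 < sc n.
Proof. apply exp_pos. Qed.
Lemma ln2_pos : 0 < ln 2.
Proof. rewrite <- ln_1. apply ln_increasing; lra. Qed.
Lemma sc_succ n : sc (n + 1) = 2 * sc n.
Proof. unfold sc. rewrite plus_IZR, Rmult_plus_distr_r, Rmult_1_l, exp_plus, exp_ln by lra. ring. Qed.

Definition Fco {X} (d : X -> X -> R) (x0 : X) (U : Z -> (X -> Prop) -> Prop) (x : X)
  (p : Z * (X -> Prop)) : R :=
  if excluded_middle_informative (U (fst p) (snd p))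
  then Rmin (dc d (sc (fst p)) (snd p) x) (Rmax 0 (d x0 x - sc (fst p))) else 0.

Lemma min_max_lip a a' b b' e : a <= a' + e -> a' <= a + e -> b <= b' + e -> b' <= b + e ->
  Rabs (Rmin a (Rmax 0 b) - Rmin a' (Rmax 0 b')) <= e.
Proof. intros. unfold Rmin, Rmax. repeat destruct Rle_dec; apply Rabs_le; lra. Qed.

Lemma Fco_lip {X} (d : X -> X -> R) (Hd : is_metric d) x0 U x y p :
  Rabs (Fco d x0 U x p - Fco d x0 U y p) <= d x y.
Proof.
  pose proof Hd as [Hd0 [Hdeq [Hsym Htri]]].
  unfold Fco. destruct (excluded_middle_informative _).
  - pose proof (sc_pos (fst p)). apply min_max_lip.
    + rewrite (Hsym x y). apply dc_lip; auto; lra.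
    + apply dc_lip; auto; lra.
    + pose proof (Htri x0 y x). rewrite (Hsym y x) in *. lra.
    + pose proof (Htri x0 x y). lra.
  - rewrite Rminus_0_r, Rabs_R0. auto.
Qed.

Lemma Fco_nonneg {X} (d : X -> X -> R) (Hd : is_metric d) x0 U x p : 0 <= Fco d x0 U x p.
Proof.
  unfold Fco. destruct (excluded_middle_informative _); [|lra].
  pose proof (sc_pos (fst p)).
  destruct (dc_props d Hd (sc (fst p)) ltac:(lra) (snd p) x) as [? _].
  apply Rmin_glb; auto. apply Rmax_l.
Qed.

Lemma int_list (a b : R) : exists l : list Z, forall n, a < IZR n -> IZR n < b -> In n l.
Proof.
  set (m := Int_part a). set (M := up b).
  exists (map (fun j => (m + Z.of_nat j)%Z) (seq 0 (Z.to_nat (M - m)))).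
  intros n Ha Hb. destruct (base_Int_part a) as [H1 _]. destruct (archimed b) as [H2 _].
  fold m in H1. fold M in H2.
  assert (Hm : (m < n)%Z) by (apply lt_IZR; lra).
  assert (HM : (n < M)%Z) by (apply lt_IZR; lra).
  apply in_map_iff. exists (Z.to_nat (n - m)). split. lia. apply in_seq. lia.
Qed.

Lemma lt_div_l a b l : 0 < l -> a < b * l -> a / l < b.
Proof. intros Hl H. apply Rmult_lt_reg_r with l; auto. unfold Rdiv.
  rewrite Rmult_assoc, Rinv_l, Rmult_1_r; lra. Qed.
Lemma lt_div_r a b l : 0 < l -> b * l < a -> b < a / l.
Proof. intros Hl H. apply Rmult_lt_reg_r with l; auto. unfold Rdiv.
  rewrite Rmult_assoc, Rinv_l, Rmult_1_r; lra. Qed.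

Lemma Fco_c0 {X} (d : X -> X -> R) (Hd : is_metric d) x0 U
  (Hpf : forall n, point_finite (U n)) x : in_c0 (Fco d x0 U x).
Proof.
  pose proof Hd as [Hd0 [Hdeq [Hsym Htri]]].
  intros eta Heta.
  set (lst := fun n => proj1_sig (constructive_indefinite_description _ (Hpf n x))).
  assert (Hlst : forall n V, U n V -> V x -> In V (lst n)).
  { intros n V. unfold lst. destruct (constructive_indefinite_description _ _) as [l Hl]. simpl. auto. }
  destruct (int_list (ln eta / ln 2) (ln (d x0 x + 1) / ln 2)) as [nl Hnl].
  exists (flat_map (fun n => map (fun V => (n, V)) (lst n)) nl).
  intros [n V] Hp. pose proof (Fco_nonneg d Hd x0 U x (n, V)) as Hnn.
  rewrite Rabs_right in Hp by lra. unfold Fco in Hp. simpl in Hp.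
  destruct (excluded_middle_informative (U n V)) as [HU|]; [|lra].
  pose proof (sc_pos n) as Hs.
  destruct (dc_props d Hd (sc n) ltac:(lra) V x) as (_ & Hc & Hy & _).
  pose proof (Rmin_l (dc d (sc n) V x) (Rmax 0 (d x0 x - sc n))).
  pose proof (Rmin_r (dc d (sc n) V x) (Rmax 0 (d x0 x - sc n))).
  assert (HVx : V x).
  { apply NNPP. intros Hn. specialize (Hy x Hn). assert (d x x = 0) by (apply Hdeq; auto). lra. }
  assert (Hr : sc n < d x0 x).
  { unfold Rmax in *. destruct Rle_dec; lra. }
  apply in_flat_map. exists n. split.
  - apply Hnl.
    + apply lt_div_l. apply ln2_pos. unfold sc in Hs.
      replace (IZR n * ln 2) with (ln (sc n)) by (unfold sc; rewrite ln_exp; auto).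
      apply ln_increasing; lra.
    + apply lt_div_r. apply ln2_pos.
      replace (IZR n * ln 2) with (ln (sc n)) by (unfold sc; rewrite ln_exp; auto).
      apply ln_increasing; lra.
  - apply in_map. auto.
Qed.

Lemma Fco_low {X} (d : X -> X -> R) (Hd : is_metric d) x0 U C' D' (HC : 0 <= C') (HD : 0 <= D')
  (Hleb : forall n x, exists V, U n V /\ forall z, d x z < sc n / 4 -> V z)
  (Hdiam : forall n V x y, U n V -> V x -> V y -> d x y < C' * sc n + D')
  x y (Hxy : d x0 y <= d x0 x) (Ht : 0 < d x y) (HtD : (C'+4) * D' / 2 <= d x y) :
  exists p, d x y / (8*(C'+4)) <= Fco d x0 U x p - Fco d x0 U y p.
Proof.
  pose proof Hd as [Hd0 [Hdeq [Hsym Htri]]].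
  set (K := C' + 4) in *. assert (HK : 4 <= K) by (unfold K; lra).
  set (t := d x y). fold t in Ht. fold t in HtD. set (u := t / K).
  assert (Htu : t = K * u) by (unfold u; field; intro; lra).
  assert (Hu : 0 < u) by (unfold u; apply Rdiv_lt_0_compat; lra).
  set (n := Int_part (ln u / ln 2)).
  destruct (base_Int_part (ln u / ln 2)) as [Hb1 Hb2]. fold n in Hb1, Hb2.
  pose proof ln2_pos as Hl2.
  assert (Hlu : ln u = (ln u / ln 2) * ln 2) by (field; intro; lra).
  assert (Hn1 : IZR n * ln 2 <= ln u).
  { rewrite Hlu. apply Rmult_le_compat_r; lra. }
  assert (Hn2 : ln u < (IZR n + 1) * ln 2).
  { rewrite Hlu. apply Rmult_lt_compat_r; lra. }
  assert (Hsu : sc n <= u).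
  { unfold sc. rewrite <- (exp_ln u) by auto. destruct (Rle_lt_or_eq_dec _ _ Hn1) as [Hl|He].
    left. apply exp_increasing; auto. right. rewrite He. reflexivity. }
  assert (Hus : u < 2 * sc n).
  { rewrite <- sc_succ. unfold sc. rewrite <- (exp_ln u) at 1 by auto. apply exp_increasing.
    rewrite plus_IZR. exact Hn2. }
  pose proof (sc_pos n) as Hs.
  destruct (Hleb n x) as [V [HUV HV]].
  exists (n, V).
  assert (HVx : V x) by (apply HV; rewrite (proj2 (Hdeq x x) eq_refl); lra).
  assert (HnVy : ~ V y).
  { intros HVy. specialize (Hdiam n V x y HUV HVx HVy). fold t in Hdiam.
    assert (K * (D'/2) <= K * u) by lra.
    assert (D'/2 <= u) by (apply Rmult_le_reg_l with K; lra).
    assert (K * sc n <= K * u) by (apply Rmult_le_compat_l; lra).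
    unfold K in *. lra. }
  assert (Hdx : sc n / 4 <= dc d (sc n) V x).
  { apply (dc_props d Hd (sc n) ltac:(lra) V x). lra.
    intros z Hz. destruct (Rle_dec (sc n / 4) (d x z)) as [?|Hn]; auto. exfalso. apply Hz, HV. lra. }
  assert (Hdy : dc d (sc n) V y <= 0).
  { destruct (dc_props d Hd (sc n) ltac:(lra) V y) as (_ & _ & Hy & _).
    rewrite <- (proj2 (Hdeq y y) eq_refl). apply Hy. auto. }
  assert (Hr : 2 * sc n <= d x0 x).
  { pose proof (Htri x x0 y) as Htr. rewrite (Hsym x x0) in Htr. fold t in Htr.
    assert (K * sc n <= K * u) by (apply Rmult_le_compat_l; lra).
    assert (4 * sc n <= K * sc n) by (apply Rmult_le_compat_r; lra). lra. }
  unfold Fco; simpl. destruct (excluded_middle_informative (U n V)) as [_|]; [|contradiction].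
  assert (Hfx : sc n / 4 <= Rmin (dc d (sc n) V x) (Rmax 0 (d x0 x - sc n))).
  { apply Rmin_glb; auto. eapply Rle_trans; [|apply Rmax_r]. lra. }
  pose proof (Rmin_l (dc d (sc n) V y) (Rmax 0 (d x0 y - sc n))).
  assert (t / (8 * K) = u / 8) by (unfold u; field; intro; lra).
  lra.
Qed.

Lemma props_to_emb {X I} (d : X -> X -> R) (Hd : is_metric d) (f : X -> I -> R) A B
  (HA : 1 <= A) (HB : 0 <= B)
  (Hlip : forall x y i, Rabs (f x i - f y i) <= d x y)
  (Hlow : forall x y, d x y / A - B <= 0 \/ exists i, d x y / A - B <= Rabs (f x i - f y i)) :
  forall t, Rbar_le (omega_f d f t) (Finite (A*t+B)) /\ Rbar_le (Finite (t/A - B)) (rho_f d f t).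
Proof.
  pose proof Hd as [Hd0 [Hdeq [Hsym Htri]]].
  intros t. split.
  - apply lub_least. intros s (x1 & x2 & Hle & ->). apply c0_dist_le.
    + pose proof (Hd0 x1 x2). assert (0 <= A * t) by (apply Rmult_le_pos; lra). lra.
    + intros i. specialize (Hlip x1 x2 i). pose proof (Hd0 x1 x2).
      assert (t <= A * t) by (rewrite <- (Rmult_1_l t) at 1; apply Rmult_le_compat_r; lra). lra.
  - apply glb_greatest. intros s (x1 & x2 & Hge & ->).
    assert (Htd : t / A - B <= d x1 x2 / A - B).
    { unfold Rdiv. assert (t * / A <= d x1 x2 * / A); [|lra].
      apply Rmult_le_compat_r; [left; apply Rinv_0_lt_compat; lra | lra]. }
    destruct (Hlow x1 x2) as [H0|[i Hi]].
    + eapply Rbar_le_trans; [|apply c0_dist_ge0]. simpl. lra.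
    + eapply Rbar_le_trans; [|apply (c0_dist_ge _ _ i)]. simpl. lra.
Qed.

Lemma cover_of_delta {X} (d : X -> X -> R) (Hd : is_metric d) R0 v (HR0 : 0 < R0)
  (H : Rbar_lt (Delta_c d R0) (Finite v)) :
  exists U, point_finite U /\ (forall x, exists V, U V /\ forall z, d x z < R0/4 -> V z) /\
    (forall V x y, U V -> V x -> V y -> d x y < v).
Proof.
  pose proof Hd as [Hd0 [Hdeq [Hsym Htri]]].
  destruct (classic (exists U, (is_cover U /\ point_finite U /\ Rbar_le (Finite R0) (lebesgue d U)) /\
      Rbar_lt (cover_diam d U) (Finite v))) as [[U [[Hc [Hpf Hleb]] Hlt]]|Hn].
  2:{ exfalso. assert (Rbar_le (Finite v) (Delta_c d R0)).
      { apply glb_greatest. intros s (U & Hc & Hpf & Hleb & ->). apply Rbar_not_lt_le. intros Hl.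
        apply Hn. exists U. auto. }
      pose proof (Rbar_le_lt_trans _ _ _ H0 H). simpl in H1. lra. }
  exists U. split; auto. split.
  - intros x.
    destruct (classic (exists r, 0 <= r /\ R0/2 < r /\ forall E : X -> Prop, Rbar_lt (diam d E) (Finite r) ->
      exists V, U V /\ forall x, E x -> V x)) as [[r [_ [Hr HE]]]|Hn].
    + destruct (HE (fun z => d x z < R0/4)) as [V [HV HVE]].
      * eapply Rbar_le_lt_trans. apply (diam_le d _ (R0/2)).
        intros z w Hz Hw. pose proof (Htri z x w). rewrite (Hsym z x) in *. lra. simpl. lra.
      * exists V. auto.
    + exfalso. assert (Rbar_le (lebesgue d U) (Finite (R0/2))).
      { apply lub_least. intros s (r & -> & Hr0 & Hr). simpl.
        destruct (Rle_dec r (R0/2)) as [?|Hnr]; auto. exfalso. apply Hn. exists r.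
        split; auto. split; auto. lra. }
      pose proof (Rbar_le_trans _ _ _ Hleb H0). simpl in H1. lra.
  - intros V x y HV Hx Hy.
    assert (Rbar_le (Finite (d x y)) (cover_diam d U)).
    { eapply Rbar_le_trans. apply (diam_ge d V x y Hx Hy). apply lub_ub. exists V. auto. }
    pose proof (Rbar_le_lt_trans _ _ _ H0 Hlt). exact H1.
Qed.

Lemma delta_to_emb {X} (d : X -> X -> R) (Hd : is_metric d) C' D' (HC : 0 <= C') (HD : 0 <= D')
  (Hdel : forall R0, 0 < R0 -> Rbar_lt (Delta_c d R0) (Finite (C' * R0 + D'))) :
  exists (I : Type) (f : X -> I -> R), (forall x, in_c0 (f x)) /\
    forall t, Rbar_le (omega_f d f t) (Finite ((8*(C'+4))*t + D')) /\
              Rbar_le (Finite (t/(8*(C'+4)) - D')) (rho_f d f t).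
Proof.
  pose proof Hd as [Hd0 [Hdeq [Hsym Htri]]].
  assert (HK : 1 <= 8*(C'+4)) by lra.
  destruct (classic (inhabited X)) as [[x0]|Hne].
  2:{ exists unit, (fun _ _ => 0). split.
      - intros x eta Heta. exists nil. intros i. rewrite Rabs_R0. lra.
      - apply props_to_emb; auto.
        + intros x y i. rewrite Rminus_0_r, Rabs_R0. auto.
        + intros x. exfalso. apply Hne. constructor. exact x. }
  assert (Hcov : forall n : Z, exists U, point_finite U /\
      (forall x, exists V, U V /\ forall z, d x z < sc n/4 -> V z) /\
      (forall V x y, U V -> V x -> V y -> d x y < C' * sc n + D')).
  { intros n. apply cover_of_delta; auto. apply sc_pos. apply Hdel. apply sc_pos. }
  set (U := fun n => proj1_sig (constructive_indefinite_description _ (Hcov n))).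
  assert (HU : forall n, point_finite (U n) /\
      (forall x, exists V, U n V /\ forall z, d x z < sc n/4 -> V z) /\
      (forall V x y, U n V -> V x -> V y -> d x y < C' * sc n + D')).
  { intros n. unfold U. destruct (constructive_indefinite_description _ _). simpl. auto. }
  exists (Z * (X -> Prop))%type, (Fco d x0 U). split.
  - intros x. apply Fco_c0; auto. intros n. apply HU.
  - apply props_to_emb; auto.
    + intros. apply Fco_lip; auto.
    + intros x y. destruct (Rle_dec (d x y / (8*(C'+4)) - D') 0) as [?|Hpos]; [left; auto|right].
      assert (Hdxy : 8*(C'+4) * D' < d x y).
      { assert (d x y / (8*(C'+4)) * (8*(C'+4)) = d x y) by (field; lra).
        assert (D' * (8*(C'+4)) < d x y / (8*(C'+4)) * (8*(C'+4))) by (apply Rmult_lt_compat_r; lra).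
        lra. }
      assert (Ht : 0 < d x y).
      { assert (0 <= 8*(C'+4) * D') by (apply Rmult_le_pos; lra). lra. }
      assert (HtD : (C'+4) * D' / 2 <= d x y).
      { assert (0 <= (C'+4) * D') by (apply Rmult_le_pos; lra). lra. }
      assert (Hleb : forall n x, exists V, U n V /\ forall z, d x z < sc n / 4 -> V z) by apply HU.
      assert (Hdiam : forall n V x y, U n V -> V x -> V y -> d x y < C' * sc n + D') by apply HU.
      destruct (Rle_dec (d x0 y) (d x0 x)) as [Hle|Hgt].
      * destruct (Fco_low d Hd x0 U C' D' HC HD Hleb Hdiam x y Hle Ht HtD) as [p Hp].
        exists p. rewrite Rabs_right by lra. lra.
      * assert (Hle : d x0 x <= d x0 y) by lra. rewrite (Hsym x y) in Ht, HtD.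
        destruct (Fco_low d Hd x0 U C' D' HC HD Hleb Hdiam y x Hle Ht HtD) as [p Hp].
        exists p. rewrite Rabs_minus_sym. rewrite (Hsym x y) in Hpos |- *. rewrite Rabs_right by lra. lra.
Qed.

Lemma emb_bound {X I} (d : X -> X -> R) (Hd : is_metric d) (f : X -> I -> R)
  (Hc0 : forall x, in_c0 (f x)) A B (HA : 1 <= A) (HB : 0 <= B)
  (Hf : forall t, Rbar_le (omega_f d f t) (Finite (A*t+B)) /\ Rbar_le (Finite (t/A - B)) (rho_f d f t))
  R0 L (HR0 : 0 <= R0) (HL : A*R0 + B < L) :
  Rbar_le (Delta_c d R0) (Finite (A*(8*L+B))).
Proof.
  pose proof Hd as [Hd0 [Hdeq [Hsym Htri]]].
  assert (0 <= A * R0) by (apply Rmult_le_pos; lra).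
  apply (emb_to_cover d Hd f Hc0 R0 L); auto; [lra| |].
  - intros x y Hxy i.
    assert (H1 : Rbar_le (Finite (Rabs (f x i - f y i))) (Finite (A * d x y + B))).
    { eapply Rbar_le_trans. apply c0_dist_ge. eapply Rbar_le_trans; [|apply (proj1 (Hf (d x y)))].
      apply lub_ub. exists x, y. split; auto. lra. }
    simpl in H1. assert (A * d x y <= A * R0) by (apply Rmult_le_compat_l; lra). lra.
  - intros x y Hi.
    assert (H1 : Rbar_le (Finite (d x y / A - B)) (Finite (8 * L))).
    { eapply Rbar_le_trans. apply (proj2 (Hf (d x y))). eapply Rbar_le_trans.
      apply glb_lb. exists x, y. split; [lra|reflexivity]. apply c0_dist_le; auto. lra. }
    simpl in H1. assert (d x y = A * (d x y / A)) by (field; lra).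
    assert (A * (d x y / A) <= A * (8 * L + B)) by (apply Rmult_le_compat_l; lra). lra.
Qed.

Lemma Rbar_le_eps x a : (forall e, 0 < e -> Rbar_le x (Finite (a + e))) -> Rbar_le x (Finite a).
Proof.
  intros H. destruct x as [r| |]; simpl; auto.
  - destruct (Rle_dec r a) as [?|Hn]; auto. specialize (H ((r - a)/2) ltac:(lra)). simpl in H. lra.
  - specialize (H 1 ltac:(lra)). simpl in H. auto.
Qed.

Theorem corollary3p13 (X : Type) (d : X -> X -> R) (Hd : is_metric d) :
  ((exists (I : Type) (f : X -> I -> R), coarse_lipschitz_embedding d f) <->
   (exists C D : R, 0 <= C /\ 0 <= D /\
      forall R0 : R, 0 <= R0 -> Rbar_le (Delta_c d R0) (Finite (C * R0 + D))))
  /\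
  ((exists (I : Type) (f : X -> I -> R), bilipschitz_embedding d f) <->
   (exists C : R, 0 <= C /\
      forall R0 : R, 0 <= R0 -> Rbar_le (Delta_c d R0) (Finite (C * R0)))).
Proof.
  split; split.
  - intros (I & f & Hc0 & A & B & HA & HB & Hf).
    exists (8*A*A), (A*(9*B+8)). split; [|split].
    + assert (0 <= A*A) by (apply Rmult_le_pos; lra). lra.
    + apply Rmult_le_pos; lra.
    + intros R0 HR0. replace (8*A*A*R0 + A*(9*B+8)) with (A*(8*(A*R0+B+1)+B)) by ring.
      apply (emb_bound d Hd f Hc0 A B); auto. lra.
  - intros (C & D & HC & HD & H).
    destruct (delta_to_emb d Hd C (D+1) HC ltac:(lra)) as (I & f & Hc0 & Hf).
    { intros R0 HR0. eapply Rbar_le_lt_trans. apply H. lra. simpl. lra. }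
    exists I, f. split; auto. exists (8*(C+4)), (D+1). split; [lra|split; [lra|auto]].
  - intros (I & f & Hc0 & A & HA & Hf).
    exists (8*A*A). split.
    + assert (0 <= A*A) by (apply Rmult_le_pos; lra). lra.
    + intros R0 HR0. apply Rbar_le_eps. intros e He.
      replace (8*A*A*R0 + e) with (A*(8*(A*R0 + e/(8*A)) + 0)) by (field; lra).
      apply (emb_bound d Hd f Hc0 A 0); auto; [lra| |].
      * intros t. rewrite Rplus_0_r, Rminus_0_r. apply Hf.
      * assert (0 < e/(8*A)) by (apply Rdiv_lt_0_compat; lra). lra.
  - intros (C & HC & H).
    destruct (delta_to_emb d Hd (C+1) 0 ltac:(lra) ltac:(lra)) as (I & f & Hc0 & Hf).
    { intros R0 HR0. eapply Rbar_le_lt_trans. apply H. lra. simpl. lra. }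
    exists I, f. split; auto. exists (8*(C+1+4)). split; [lra|].
    intros t. specialize (Hf t). rewrite Rplus_0_r, Rminus_0_r in Hf. exact Hf.
Qed.
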